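(* Let $\Omega_1,\Omega_2\subset\mathbb{R}^n$ be bounded measurable sets, $\Omega:=\Omega_1\times\Omega_2$, and let $\Phi$ be a quasi-Young's function satisfying either (1) there is $C>0$ with $\Phi(xy)\le C\,\Phi(x)\Phi(y)$ for all $x,y\ge 0$; or (2) there are $C_1,C_2\ge 0$ with $\Phi(xy)\le C_1\,x\,\Phi(y)+C_2\,\Phi(x)\,y$ for all $x,y\ge0$, and $\Phi(t)/t\to\infty$ as $t\to\infty$. If $\mu_i\in L^\Phi(\Omega_i)$ for $i=1,2$, then $\mu_1\otimes\mu_2\in L^\Phi(\Omega)$, where $(\mu_1\otimes\mu_2)(x_1,x_2):=\mu_1(x_1)\mu_2(x_2)$.
   Context: A Young's function is a function of the form $\Phi(t)=\int_0^t\varphi(s)\,ds$ for $t\ge 0$, where $\varphi:[0,\infty)\to[0,\infty]$ is increasing and lower semicontinuous with $\varphi(0)=0$, and $\varphi$ is neither identically zero nor identically $+\infty$ on $(0,\infty)$. A quasi-Young's function induced by a Young's function $\Phi$ is a convex, lower semicontinuous function $\check\Phi:[0,\infty)\to(-\infty,\infty]$, bounded from below, for which there is $t_0\ge 0$ with $\check\Phi(t)=\Phi(t)-\Phi(t_0)$ for all $t\ge t_0$ and $\check\Phi(t)\le 0$ for all $t<t_0$ (every Young's function is a quasi-Young's function, with $t_0=0$). For a measurable set $U\subset\mathbb{R}^d$ and a quasi-Young's function $\Phi$, the Luxemburg norm of a measurable $f:U\to\mathbb{R}$ is $\|f\|_\Phi:=\inf\{\lambda\ge 0:\int_U\Phi(|f|/\lambda)\,dx\le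 1\}$, and the Orlicz space is $L^\Phi(U):=\{f:U\to\mathbb{R}\text{ measurable}:\|f\|_\Phi<\infty\}$. *)

(* Defs.v *)
From HB Require Import structures.
From mathcomp Require Import all_boot all_order all_algebra.
From mathcomp Require Import all_classical all_reals all_analysis.

Set Implicit Arguments.
Unset Strict Implicit.
Unset Printing Implicit Defensive.

Import Order.TTheory GRing.Theory Num.Theory.
Import numFieldNormedType.Exports.

Local Open Scope classical_set_scope.
Local Open Scope ring_scope.
Local Open Scope ereal_scope.

(* All functions below are R -> \bar R; only their values on [0, +oo) matter. *)

Definition nondecr0 {R : realType} (f : R -> \bar R) : Prop :=
  forall s t : R, (0 <= s)%R -> (s <= t)%R -> f s <= f t.

Definition lsc0 {R : realType} (f : R -> \bar R) : Prop :=
  forall s : R, (0 <= s)%R -> forall a : \bar R, a < f s ->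
    \forall t \near s, (0 <= t)%R -> a < f t.

Definition convex0 {R : realType} (f : R -> \bar R) : Prop :=
  forall (x y l : R), (0 <= x)%R -> (0 <= y)%R -> (0 <= l <= 1)%R ->
    f (l * x + (1 - l) * y)%R <= l%:E * f x + (1 - l)%:E * f y.

Definition isYoung {R : realType} (Phi : R -> \bar R) : Prop :=
  exists phi : R -> \bar R,
    [/\ (forall s : R, (0 <= s)%R -> 0 <= phi s),
        nondecr0 phi, lsc0 phi, phi 0%R = 0 &
        (exists s : R, (0 < s)%R /\ phi s != 0)] /\
    [/\
        (exists s : R, (0 < s)%R /\ phi s != +oo) &
        (forall t : R, (0 <= t)%R ->
           Phi t = \int[@lebesgue_measure R]_(s in `[0%R, t]) phi s)].

Definition isQuasiYoung {R : realType} (Psi : R -> \bar R) : Prop :=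
  exists Phi : R -> \bar R, isYoung Phi /\
    [/\ (forall t : R, (0 <= t)%R -> Psi t != -oo),
        convex0 Psi, lsc0 Psi,
        (exists m : R, forall t : R, (0 <= t)%R -> m%:E <= Psi t) &
        exists t0 : R,
          [/\ (0 <= t0)%R, Phi t0 \is a fin_num,
              (forall t : R, (t0 <= t)%R -> Psi t = Phi t - Phi t0) &
              (forall t : R, (0 <= t)%R -> (t < t0)%R -> Psi t <= 0)]].

Definition luxemburg_norm {d} {T : measurableType d} {R : realType}
    (mu : {measure set T -> \bar R}) (U : set T) (Psi : R -> \bar R)
    (f : T -> R) : \bar R :=
  ereal_inf [set l%:E | l in
    [set l : R | (0 < l)%R /\
       \int[mu]_(x in U) Psi (`|f x| / l)%R <= 1]].

Definition in_Orlicz {d} {T : measurableType d} {R : realType}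
    (mu : {measure set T -> \bar R}) (U : set T) (Psi : R -> \bar R)
    (f : T -> R) : Prop :=
  measurable_fun U f /\ luxemburg_norm mu U Psi f < +oo.

(* Main.v *)
Require Import Defs.
From HB Require Import structures.
From mathcomp Require Import all_boot all_order all_algebra.
From mathcomp Require Import all_classical all_reals all_analysis.
From mathcomp Require Import measurable_realfun.
From mathcomp Require Import ring lra.

Import Order.TTheory GRing.Theory Num.Theory.
Import numFieldNormedType.Exports.

Local Open Scope classical_set_scope.
Local Open Scope ring_scope.
Local Open Scope ereal_scope.
Lemma prod_int (R : realType) (d : measure_display)
  (T : measurableType d) (mu : {sigma_finite_measure set T -> \bar R})
  (F G : T -> \bar R) : measurable_fun [set: T] F -> measurable_fun [set: T] G ->
  (forall x, 0 <= F x) -> (forall x, 0 <= G x) ->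
  \int[mu \x mu]_z (F z.1 * G z.2) = \int[mu]_x F x * \int[mu]_y G y.
Proof.
move=> mF mG F0 G0.
rewrite fubini_tonelli1; last 2 first.
- apply: emeasurable_funM.
  + exact: measurableT_comp mF measurable_fst.
  + exact: measurableT_comp mG measurable_snd.
- by move=> z; apply: mule_ge0.
rewrite /fubini_F /=.
under eq_integral => x _ do rewrite ge0_integralZl//.
by rewrite ge0_integralZr//; apply: integral_ge0.
Qed.

Lemma patch_ge0 {R : realType} {T : Type} {A : set T} {F : T -> \bar R} :
  (forall x, A x -> 0 <= F x) -> forall x, 0 <= (F \_ A) x.
Proof.
move=> F0 x; rewrite patchE; case: ifPn => // /set_mem; exact: F0.
Qed.

Lemma prod_bound (R : realType) (d : measure_display)
  (T : measurableType d) (mu : {sigma_finite_measure set T -> \bar R})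
  (A B : set T) (mA : measurable A) (mB : measurable B)
  (H : T * T -> \bar R) (F1 G1 F2 G2 : T -> \bar R) :
  measurable_fun A F1 -> measurable_fun B G1 ->
  measurable_fun A F2 -> measurable_fun B G2 ->
  (forall x, A x -> 0 <= F1 x) -> (forall x, B x -> 0 <= G1 x) ->
  (forall x, A x -> 0 <= F2 x) -> (forall x, B x -> 0 <= G2 x) ->
  \int[mu]_(x in A) F1 x < +oo -> \int[mu]_(x in B) G1 x < +oo ->
  \int[mu]_(x in A) F2 x < +oo -> \int[mu]_(x in B) G2 x < +oo ->
  measurable_fun (A `*` B) H ->
  (forall z, (A `*` B) z -> H z <= F1 z.1 * G1 z.2 + F2 z.1 * G2 z.2) ->
  \int[mu \x mu]_(z in A `*` B) H^\+ z < +oo.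
Proof.
move=> mF1 mG1 mF2 mG2 F10 G10 F20 G20 iF1 iG1 iF2 iG2 mH Hle.
have mD : measurable (A `*` B) by exact: measurableX.
set F1' := F1 \_ A; set G1' := G1 \_ B; set F2' := F2 \_ A; set G2' := G2 \_ B.
have mF1' : measurable_fun [set: T] F1' by apply/(measurable_restrictT F1 mA).
have mG1' : measurable_fun [set: T] G1' by apply/(measurable_restrictT G1 mB).
have mF2' : measurable_fun [set: T] F2' by apply/(measurable_restrictT F2 mA).
have mG2' : measurable_fun [set: T] G2' by apply/(measurable_restrictT G2 mB).
have F1'0 := patch_ge0 F10; have G1'0 := patch_ge0 G10.
have F2'0 := patch_ge0 F20; have G2'0 := patch_ge0 G20.
have mP1 : measurable_fun [set: T * T] (fun z => F1' z.1 * G1' z.2).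
  apply: emeasurable_funM.
  + exact: measurableT_comp mF1' measurable_fst.
  + exact: measurableT_comp mG1' measurable_snd.
have mP2 : measurable_fun [set: T * T] (fun z => F2' z.1 * G2' z.2).
  apply: emeasurable_funM.
  + exact: measurableT_comp mF2' measurable_fst.
  + exact: measurableT_comp mG2' measurable_snd.
have P0 : forall z, 0 <= F1' z.1 * G1' z.2 + F2' z.1 * G2' z.2.
  by move=> z; apply: adde_ge0; apply: mule_ge0.
have Hle1 : \int[mu \x mu]_(z in A `*` B) H^\+ z <= \int[mu \x mu]_(z in A `*` B)
   (F1' z.1 * G1' z.2 + F2' z.1 * G2' z.2).
  apply: ge0_le_integral => //.
  - exact: (measurable_funepos mH).
  - by apply: measurable_funS (emeasurable_funD mP1 mP2).
  - move=> [x y] [/= Ax By]; rewrite funeposE ge_max (P0 (x, y)) andbT.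
    rewrite /F1' /G1' /F2' /G2' !patchE !ifT ?inE//.
    exact: (Hle (x, y)).
apply: (le_lt_trans Hle1).
apply: (le_lt_trans (ge0_subset_integral (mu \x mu) mD measurableT
  (emeasurable_funD mP1 mP2) (fun z _ => P0 z) (@subsetT _ _))).
rewrite ge0_integralD//; last 2 first.
  by move=> z _; apply: mule_ge0.
  by move=> z _; apply: mule_ge0.
rewrite !prod_int//.
have -> : \int[mu]_x F1' x = \int[mu]_(x in A) F1 x by rewrite -integral_mkcond.
have -> : \int[mu]_x F2' x = \int[mu]_(x in A) F2 x by rewrite -integral_mkcond.
have -> : \int[mu]_x G1' x = \int[mu]_(x in B) G1 x by rewrite -integral_mkcond.
have -> : \int[mu]_x G2' x = \int[mu]_(x in B) G2 x by rewrite -integral_mkcond.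
apply: lte_add_pinfty; apply: lte_mul_pinfty => //;
  try (by apply: integral_ge0);
  by rewrite ge0_fin_numE//; apply: integral_ge0.
Qed.
Lemma qy_Psi0 {R : realType} {Psi : R -> \bar R} : isQuasiYoung Psi -> Psi 0%R <= 0.
Proof.
case=> Phi [_ [_ _ _ _ [t0 [t00 fin eq le]]]].
have [t0p|t0n] := ltP 0%R t0; first exact: le.
have t0z : t0 = 0%R by apply/le_anti; rewrite t0n t00.
have := eq t0 (lexx _); rewrite subee// => <-.
by rewrite t0z.
Qed.

Lemma qy_lb {R : realType} {Psi : R -> \bar R} : isQuasiYoung Psi ->
  exists m : R, forall t : R, (0 <= t)%R -> m%:E <= Psi t.
Proof. by case=> Phi [_ [_ _ _ mb _]]. Qed.

Lemma qy_scale {R : realType} {Psi : R -> \bar R} : isQuasiYoung Psi ->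
  forall K t : R, (1 <= K)%R -> (0 <= t)%R -> Psi (t / K)%R <= K^-1%:E * Psi t.
Proof.
move=> hq K t K1 t0; have P0 := qy_Psi0 hq.
case: hq => Phi [_ [_ cv _ _ _]].
have K0 : (0 < K)%R by apply: lt_le_trans K1.
have := cv t 0%R (K^-1)%R t0 (lexx _).
rewrite invr_ge0 ltW//= invr_le1 ?K1//; last by rewrite unitfE gt_eqF.
rewrite mulr0 addr0 mulrC => /(_ isT) /le_trans; apply.
rewrite -[X in _ <= X]adde0; apply: leeD => //.
apply: mule_ge0_le0 => //; rewrite lee_fin subr_ge0 invr_le1//.
by rewrite unitfE gt_eqF.
Qed.

Lemma qy_meas {R : realType} {Psi : R -> \bar R} : isQuasiYoung Psi ->
  measurable_fun [set: R] (fun t : R => Psi `|t|%R).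
Proof.
case=> Phi [_ [_ _ lsc _ _]].
apply: lower_semicontinuous_measurable => x a ax.
have := lsc `|x|%R (normr_ge0 _) a%:E ax.
move=> H; exists [set y : R | (0 <= `|y|)%R -> a%:E < Psi `|y|%R].
  have nc := @norm_continuous R R^o x; exact: nc _ H.
by move=> y /(_ (normr_ge0 _)).
Qed.

Lemma qy_meas_comp {R : realType} {Psi : R -> \bar R} {d} {T : measurableType d}
  (hq : isQuasiYoung Psi) {A : set T} {a : T -> R} :
  measurable A -> measurable_fun A a -> (forall x, A x -> (0 <= a x)%R) ->
  measurable_fun A (fun x => Psi (a x)).
Proof.
move=> mA ma a0.
apply: (eq_measurable_fun (fun x => Psi `|a x|%R)).
  by move=> x /set_mem Ax /=; rewrite ger0_norm// a0.
exact: measurableT_comp (qy_meas hq) ma.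
Qed.

Lemma qy_pos_fin {R : realType} {Psi : R -> \bar R} {d} {T : measurableType d}
  (hq : isQuasiYoung Psi) (mu : {measure set T -> \bar R}) (A : set T) (a : T -> R) :
  measurable A -> mu A < +oo -> measurable_fun A a -> (forall x, A x -> (0 <= a x)%R) ->
  \int[mu]_(x in A) Psi (a x) <= 1 ->
  \int[mu]_(x in A) (fun x => Psi (a x))^\+ x < +oo.
Proof.
move=> mA muA ma a0 hint.
have mf := qy_meas_comp hq mA ma a0.
have [m hm] := qy_lb hq.
have hneg : \int[mu]_(x in A) (fun x => Psi (a x))^\- x <= \int[mu]_(x in A) (cst `|m|%:E) x.
  apply: ge0_le_integral => //.
  - exact: measurable_funeneg.
  - move=> x Ax; rewrite funenegE /= ge_max lee_fin normr_ge0 andbT.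
    rewrite leeNl; apply: le_trans (hm _ (a0 _ Ax)).
    by rewrite lee_fin lerNl -normrN ler_norm.
rewrite integral_cst// in hneg.
have negfin : \int[mu]_(x in A) (fun x => Psi (a x))^\- x \is a fin_num.
  rewrite ge0_fin_numE; last by apply: integral_ge0.
  apply: le_lt_trans hneg _; apply: lte_mul_pinfty => //.
move: hint; rewrite integralE lee_subel_addl// => hle.
apply: le_lt_trans hle _; apply: lte_add_pinfty => //.
by move: negfin; rewrite fin_numElt => /andP[].
by rewrite ltey.
Qed.
Lemma superlin {R : realType} {Psi : R -> \bar R} :
  (fun t : R => Psi t * (t^-1)%:E) @ +oo%R --> +oo ->
  exists T0 : R, (0 < T0)%R /\ forall t, (T0 <= t)%R -> t%:E <= Psi t.
Proof.
move=> /cvgeyPge /(_ 1%R) [M [Mreal HM]].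
exists (`|M| + 1)%R; split; first by rewrite ltr_wpDl.
move=> t Tt.
have t0 : (0 < t)%R by apply: lt_le_trans Tt; rewrite ltr_wpDl.
have Mt : (M < t)%R.
  by apply: lt_le_trans Tt; apply: le_lt_trans (real_ler_norm Mreal) _; rewrite ltrDl.
have := HM t Mt; case: (Psi t) => [r||] /=.
- by rewrite -EFinM !lee_fin ler_pdivlMr// mul1r.
- by rewrite leey.
- by rewrite mulNyr gtr0_sg ?invr_gt0// mul1e leeNy_eq.
Qed.

Lemma lin_fin {R : realType} {Psi : R -> \bar R} {d} {T : measurableType d}
  (hq : isQuasiYoung Psi) (T0 : R) (T00 : (0 < T0)%R)
  (hT : forall t, (T0 <= t)%R -> t%:E <= Psi t)
  (mu : {measure set T -> \bar R}) (A : set T) (a : T -> R) :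
  measurable A -> mu A < +oo -> measurable_fun A a -> (forall x, A x -> (0 <= a x)%R) ->
  \int[mu]_(x in A) Psi (a x) <= 1 ->
  \int[mu]_(x in A) (a x)%:E < +oo.
Proof.
move=> mA muA ma a0 hint.
have mf := qy_meas_comp hq mA ma a0.
have hp := qy_pos_fin hq mu A a mA muA ma a0 hint.
have hle : \int[mu]_(x in A) (a x)%:E <=
    \int[mu]_(x in A) (cst T0%:E x + (fun x => Psi (a x))^\+ x).
  apply: ge0_le_integral => //.
  - by apply/measurable_EFinP.
  - apply: emeasurable_funD => //; exact: measurable_funepos.
  - move=> x Ax /=; rewrite funeposE.
    have [Ta|aT] := leP T0 (a x).
      apply: le_trans (hT _ Ta) _; rewrite -[X in X <= _]add0e.
      by apply: leeD; [rewrite lee_fin ltW|rewrite le_max lexx].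
    rewrite -[X in X <= _]adde0; apply: leeD; first by rewrite lee_fin ltW.
    by rewrite le_max lexx orbT.
apply: le_lt_trans hle _.
rewrite ge0_integralD//; last 2 first.
  by move=> x _; rewrite /= lee_fin ltW.
  exact: measurable_funepos.
apply: lte_add_pinfty => //.
rewrite integral_cst//; apply: lte_mul_pinfty => //.
by rewrite lee_fin ltW.
Qed.

Lemma case1_bound {R : realType} (C m : R) (u v : \bar R) : (0 < C)%R ->
  m%:E <= u -> m%:E <= v ->
  C%:E * u * v <= C%:E * maxe u 0 * maxe v 0 + (C * (m * m))%:E * 1%:E.
Proof.
move=> C0 mu mv.
have cst0 : 0 <= (C * (m * m))%:E * 1%:E.
  by rewrite mule1 lee_fin; apply: mulr_ge0; [exact: ltW|nra].
have [u0|u0] := leP 0 u; have [v0|v0] := leP 0 v.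
- exact: leeDl.
- rewrite mule0 add0e; apply: le_trans cst0.
  apply: mule_ge0_le0; last exact: ltW.
  by apply: mule_ge0 => //; rewrite lee_fin ltW.
- rewrite mule0 mul0e add0e; apply: le_trans cst0.
  by apply: mule_le0_ge0 => //; apply: mule_ge0_le0; rewrite ?lee_fin ?ltW.
- move: mu mv u0 v0; case: u => [r| |] //; case: v => [s| |] //.
  rewrite !lee_fin !lte_fin => mr ms r0 s0.
  rewrite !mulr0 add0r mulr1 -mulrA; apply: ler_wpM2l; [exact: ltW|].
  nra.
Qed.

Lemma case2_bound {R : realType} (C1 C2 x y : R) (u v w : \bar R) :
  (0 <= C1)%R -> (0 <= C2)%R -> (0 <= x)%R -> (0 <= y)%R ->
  w <= (C1 * x)%:E * v + u * (C2 * y)%:E ->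
  w <= (C1 * x)%:E * maxe v 0 + maxe u 0 * (C2 * y)%:E.
Proof.
move=> C10 C20 x0 y0 /le_trans; apply; apply: leeD.
  by apply: lee_wpmul2l; rewrite ?lee_fin ?mulr_ge0// le_max lexx.
by apply: lee_wpmul2r; rewrite ?lee_fin ?mulr_ge0// le_max lexx.
Qed.
Theorem mainTheorem2 (R : realType) (d : measure_display)
  (T : measurableType d) (mu : {sigma_finite_measure set T -> \bar R})
  (Omega1 Omega2 : set T)
  (mO1 : measurable Omega1) (mO2 : measurable Omega2)
  (fO1 : mu Omega1 < +oo) (fO2 : mu Omega2 < +oo)
  (Phi : R -> \bar R) (hPhi : isQuasiYoung Phi)
  (hcond :
     (exists C : R, (0 < C)%R /\
        forall x y : R, (0 <= x)%R -> (0 <= y)%R ->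
          Phi (x * y)%R <= C%:E * Phi x * Phi y)
     \/
     ((exists C1 C2 : R, (0 <= C1)%R /\ (0 <= C2)%R /\
        forall x y : R, (0 <= x)%R -> (0 <= y)%R ->
          Phi (x * y)%R <= (C1 * x)%:E * Phi y + Phi x * (C2 * y)%:E)
      /\ (fun t : R => Phi t * (t^-1)%:E) @ +oo%R --> +oo))
  (mu1 mu2 : T -> R)
  (h1 : in_Orlicz mu Omega1 Phi mu1) (h2 : in_Orlicz mu Omega2 Phi mu2) :
  in_Orlicz (mu \x mu) (Omega1 `*` Omega2) Phi
    (fun z : T * T => (mu1 z.1 * mu2 z.2)%R).
Proof.
case: h1 => mf1 /ereal_inf_lt [_ [l1 [l10 hl1] <-] _].
case: h2 => mf2 /ereal_inf_lt [_ [l2 [l20 hl2] <-] _].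
set D := Omega1 `*` Omega2.
have mD : measurable D by exact: measurableX.
have mfst : measurable_fun D fst.
  exact: measurable_funS measurableT (@subsetT _ D) measurable_fst.
have msnd : measurable_fun D snd.
  exact: measurable_funS measurableT (@subsetT _ D) measurable_snd.
have im1 : [set z.1 | z in D] `<=` Omega1 by move=> _ [[x y] [/= Hx Hy] <-].
have im2 : [set z.2 | z in D] `<=` Omega2 by move=> _ [[x y] [/= Hx Hy] <-].
set f := fun z : T * T => (mu1 z.1 * mu2 z.2)%R.
have mf : measurable_fun D f.
  apply: measurable_funM.
  - exact: measurable_comp mO1 im1 mf1 mfst.
  - exact: measurable_comp mO2 im2 mf2 msnd.
split => //.
set a := fun x => (`|mu1 x| / l1)%R.
set b := fun x => (`|mu2 x| / l2)%R.
have a0 : forall x, (0 <= a x)%R by move=> x; rewrite /a divr_ge0// ltW.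
have b0 : forall x, (0 <= b x)%R by move=> x; rewrite /b divr_ge0// ltW.
have ma : measurable_fun Omega1 a.
  apply: measurable_funM; last exact: measurable_cst.
  exact: measurableT_comp (@normr_measurable R setT) mf1.
have mb : measurable_fun Omega2 b.
  apply: measurable_funM; last exact: measurable_cst.
  exact: measurableT_comp (@normr_measurable R setT) mf2.
set H := fun z : T * T => Phi (a z.1 * b z.2)%R.
have mab : measurable_fun D (fun z : T * T => a z.1 * b z.2)%R.
  apply: measurable_funM.
  - exact: measurable_comp mO1 im1 ma mfst.
  - exact: measurable_comp mO2 im2 mb msnd.
have mH : measurable_fun D H.
  exact: (qy_meas_comp hPhi mD mab (fun z _ => mulr_ge0 (a0 z.1) (b0 z.2))).
have hint1 : \int[mu]_(x in Omega1) Phi (a x) <= 1 by [].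
have hint2 : \int[mu]_(x in Omega2) Phi (b x) <= 1 by [].
have fp1 := qy_pos_fin hPhi mu Omega1 a mO1 fO1 ma (fun x _ => a0 x) hint1.
have fp2 := qy_pos_fin hPhi mu Omega2 b mO2 fO2 mb (fun x _ => b0 x) hint2.
have mPa := qy_meas_comp hPhi mO1 ma (fun x _ => a0 x).
have mPb := qy_meas_comp hPhi mO2 mb (fun x _ => b0 x).
have Hfin : \int[mu \x mu]_(z in D) H^\+ z < +oo.
  case: hcond => [[C [C0 hC]]|[[C1 [C2 [C10 [C20 hC]]]] hlim]].
  - have [m hm] := qy_lb hPhi.
    apply: (@prod_bound _ _ _ mu _ _ mO1 mO2 H
      (fun x => C%:E * (fun x => Phi (a x))^\+ x) (fun x => Phi (b x))^\+
      (cst (C * (m * m))%:E) (cst 1)) => //.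
    + apply: emeasurable_funM => //; exact: measurable_funepos.
    + exact: measurable_funepos.
    + by move=> x _; apply: mule_ge0 => //; rewrite lee_fin ltW.
    + by move=> x _; rewrite /= lee_fin; apply: mulr_ge0; [exact: ltW|nra].
    + by rewrite ge0_integralZl_EFin ?ltW//; [apply: lte_mul_pinfty; rewrite ?lee_fin ?ltW|exact: measurable_funepos].
    + by rewrite integral_cst//; apply: lte_mul_pinfty; rewrite ?lee_fin//; nra.
    + by rewrite integral_cst// mul1e.
    + move=> [x y] [/= Hx Hy]; rewrite /H /= !funeposE -muleA.
      apply: le_trans (hC _ _ (a0 x) (b0 y)) _; rewrite muleA.
      exact: case1_bound (hm _ (a0 x)) (hm _ (b0 y)).
  - have [T0 [T00 hT]] := superlin hlim.
    have la := lin_fin hPhi T0 T00 hT mu Omega1 a mO1 fO1 ma (fun x _ => a0 x) hint1.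
    have lb := lin_fin hPhi T0 T00 hT mu Omega2 b mO2 fO2 mb (fun x _ => b0 x) hint2.
    apply: (@prod_bound _ _ _ mu _ _ mO1 mO2 H
      (fun x => (C1 * a x)%:E) (fun x => Phi (b x))^\+
      (fun x => Phi (a x))^\+ (fun y => (C2 * b y)%:E)) => //.
    + by apply/measurable_EFinP; apply: measurable_funM => //; exact: measurable_cst.
    + exact: measurable_funepos.
    + exact: measurable_funepos.
    + by apply/measurable_EFinP; apply: measurable_funM => //; exact: measurable_cst.
    + by move=> x _; rewrite lee_fin mulr_ge0.
    + by move=> x _; rewrite lee_fin mulr_ge0.
    + under eq_integral do rewrite EFinM.
      rewrite ge0_integralZl_EFin//.
      all: try (by move=> x _; rewrite lee_fin).
      all: try (by apply/measurable_EFinP).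
      by apply: lte_mul_pinfty.
    + under eq_integral do rewrite EFinM.
      rewrite ge0_integralZl_EFin//.
      all: try (by move=> x _; rewrite lee_fin).
      all: try (by apply/measurable_EFinP).
      by apply: lte_mul_pinfty.
    + move=> [x y] [/= Hx Hy]; rewrite /H /= !funeposE.
      exact: case2_bound (hC _ _ (a0 x) (b0 y)).
set I := fine (\int[mu \x mu]_(z in D) H^\+ z).
have I0 : (0 <= \int[mu \x mu]_(z in D) H^\+ z) by apply: integral_ge0.
have IE : \int[mu \x mu]_(z in D) H^\+ z = I%:E.
  by rewrite fineK// ge0_fin_numE.
set K := Num.max 1%R I.
have K1 : (1 <= K)%R by rewrite le_max lexx.
have K0 : (0 < K)%R by apply: lt_le_trans K1.
have IK : (I <= K)%R by rewrite le_max lexx orbT.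
apply: (@le_lt_trans _ _ (l1 * l2 * K)%:E); last by rewrite ltey.
apply: ereal_inf_lbound; exists (l1 * l2 * K)%R => //; split.
  by rewrite !mulr_gt0.
set g := fun z : T * T => Phi (`|f z| / (l1 * l2 * K))%R.
have gE : forall z, g z = Phi ((a z.1 * b z.2) / K)%R.
  move=> z; rewrite /g /f /a /b normrM; congr (Phi _).
  by field; rewrite !gt_eqF.
have mg : measurable_fun D g.
  apply: (eq_measurable_fun (fun z => Phi ((a z.1 * b z.2) / K)%R)).
    by move=> z _; rewrite gE.
  have mabK : measurable_fun D (fun z : T * T => (a z.1 * b z.2) / K)%R.
    by apply: measurable_funM => //; exact: measurable_cst.
  exact: (qy_meas_comp hPhi mD mabK
    (fun z _ => divr_ge0 (mulr_ge0 (a0 z.1) (b0 z.2)) (ltW K0))).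
rewrite integralE.
apply: le_trans (leeB (lexx _) (integral_ge0 _ _)) _.
  by move=> z _; rewrite funenegE le_max lexx orbT.
rewrite sube0.
apply: (@le_trans _ _ (\int[mu \x mu]_(z in D) ((K^-1)%:E * H^\+ z))).
  apply: ge0_le_integral => //.
  - exact: measurable_funepos.
  - apply: emeasurable_funM => //; exact: measurable_funepos.
  - move=> z Dz; rewrite funeposE ge_max; apply/andP; split; last first.
      by apply: mule_ge0 => //; rewrite lee_fin invr_ge0 ltW.
    have := gE z; rewrite /g => ->.
    apply: le_trans (qy_scale hPhi K _ K1 (mulr_ge0 (a0 z.1) (b0 z.2))) _.
    apply: lee_wpmul2l; first by rewrite lee_fin invr_ge0 ltW.
    by rewrite funeposE le_max lexx.
rewrite ge0_integralZl_EFin//.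
all: try (by rewrite invr_ge0 ltW).
all: try (exact: measurable_funepos).
rewrite IE -EFinM lee_fin -(mulVf (lt0r_neq0 K0)).
by apply: ler_wpM2l => //; rewrite invr_ge0 ltW.
Qed.
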